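(* For any $P,N>0$ with $\frac NP\le\frac{L-1}{L}$ and any $L\in\mathbb{Z}_{\ge2}$, $$\overline{C}_{L-1}(P,N)\ge\frac12\left(1-\frac{LN}{(L-1)P}-\frac1{L-1}\ln\frac{L(P-N)}{P}\right).$$
   Context: $\mathcal{B}^n(r)$ is the closed Euclidean ball of radius $r$ centered at the origin. For $x_1,\dots,x_L\in\mathbb{R}^n$ with centroid $\bar x=\frac1L\sum_ix_i$, $\overline{\mathrm{rad}}^2(x_1,\dots,x_L)=\frac1L\sum_i\|x_i-\bar x\|_2^2$. A finite $\mathcal{C}\subseteq\mathcal{B}^n(\sqrt{nP})$ is $(P,N,L-1)$-average-radius list-decodable if every $L$ distinct points of $\mathcal{C}$ have $\overline{\mathrm{rad}}^2>nN$. Rate $R(\mathcal{C})=\frac1n\ln|\mathcal{C}|$. $\overline{C}_{L-1}(P,N)=\limsup_{n\to\infty}\sup R(\mathcal{C})$ over such codes in $\mathcal{B}^n(\sqrt{nP})$. *)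

(* Defs.v *)
From HB Require Import structures.
From mathcomp Require Import all_boot all_order all_algebra.
From mathcomp Require Import all_classical all_reals.
From mathcomp Require Import ereal sequences exp.
Set Implicit Arguments. Unset Strict Implicit. Unset Printing Implicit Defensive.
Import Order.TTheory GRing.Theory Num.Theory.
Local Open Scope ring_scope.
Local Open Scope classical_set_scope.

Section Defs.
Variable R : realType.

Definition sqnorm (n : nat) (x : 'rV[R]_n) : R := \sum_(i < n) x 0 i ^+ 2.

Definition centroid (n L : nat) (x : 'I_L -> 'rV[R]_n) : 'rV[R]_n :=
  L%:R^-1 *: \sum_(i < L) x i.

Definition avg_rad2 (n L : nat) (x : 'I_L -> 'rV[R]_n) : R :=
  L%:R^-1 * \sum_(i < L) sqnorm (x i - centroid x).

(* a code C (finite, given as a duplicate-free list) contained in the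
   closed ball of radius sqrt(nP), which is (P,N,L-1)-average-radius
   list-decodable: any L distinct codewords have avg_rad2 > nN *)
Definition avg_rad_list_decodable (n L : nat) (P N : R) (C : seq 'rV[R]_n) :=
  uniq C /\
  (forall c, c \in C -> Num.sqrt (sqnorm c) <= Num.sqrt (n%:R * P)) /\
  (forall x : 'I_L -> 'rV[R]_n, injective x -> (forall i, x i \in C) ->
     avg_rad2 x > n%:R * N).

Definition rate (n : nat) (C : seq 'rV[R]_n) : R := ln (size C)%:R / n%:R.

Definition best_rate (L : nat) (P N : R) (n : nat) : \bar R :=
  ereal_sup [set (rate C)%:E | C in [set C : seq 'rV[R]_n |
                                    avg_rad_list_decodable L P N C]].

Definition list_dec_capacity (L : nat) (P N : R) : \bar R :=
  limn_esup (best_rate L P N).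
End Defs.

(* Main.v *)
Require Import Defs.
From HB Require Import structures.
From mathcomp Require Import all_boot all_order all_algebra.
From mathcomp Require Import all_classical all_reals.
From mathcomp Require Import ereal sequences exp.
From mathcomp Require Import topology normedtype.
From mathcomp Require Import zify ring lra.
From Stdlib Require Import Lia.
Import Order.TTheory GRing.Theory Num.Theory.
Import numFieldNormedType.Exports.
Local Open Scope ring_scope.
Section Cosh.
Variable R : realType.

Lemma fact_double k : (2 ^ k * k`! <= (k.*2)`!)%N.
Proof.
elim: k => [|k IH] //.
rewrite doubleS !factS expnS.
move: IH; set a := (2 ^ k)%N; set b := k`!; set c := (k.*2)`!.
rewrite -!muln2 => IH; nia.
Qed.

Lemma sum_even (g : nat -> R) m :
  (forall k, g k.*2.+1 = 0) ->
  \sum_(0 <= i < m.*2) g i = \sum_(0 <= k < m) g k.*2.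
Proof.
move=> h; elim: m => [|m IH]; first by rewrite !big_geq.
rewrite doubleS !big_nat_recr //= IH h addr0.
by [].
Qed.

Lemma cosh_le (y : R) : expR y + expR (- y) <= 2 * expR (y ^+ 2 / 2).
Proof.
rewrite /expR -limD; [|exact: is_cvg_series_exp_coeff|exact: is_cvg_series_exp_coeff].
rewrite (_ : 2 * _ = limn ((2:R) *: series (exp_coeff (y ^+ 2 / 2)))); last first.
  by rewrite limZl_tmp //; exact: is_cvg_series_exp_coeff.
apply: ler_lim.
- apply: is_cvgD; exact: is_cvg_series_exp_coeff.
- apply: is_cvgZl_tmp; exact: is_cvg_series_exp_coeff.
near=> m.
rewrite !fctE /series /= -big_split /=.
set g := fun i => exp_coeff y i + exp_coeff (- y) i.
have g0 : forall k, g k.*2.+1 = 0.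
  move=> k; rewrite /g /exp_coeff /= -mul2n !exprS !exprM sqrrN.
  by rewrite !mulNr addrN.
have ge : forall k, g k.*2 = 2 * ((y ^+ 2) ^+ k * ((k.*2)`!%:R)^-1).
  move=> k; rewrite /g /exp_coeff /= -mul2n !exprM sqrrN; lra.
have gpos : forall i, 0 <= g i.
  move=> i; have := odd_double_half i; case: (odd i) => /= <-.
    by rewrite add1n g0.
  rewrite add0n ge; apply: mulr_ge0 => //; apply: mulr_ge0.
    by apply: exprn_ge0; apply: sqr_ge0.
  by rewrite invr_ge0 ler0n.
apply: (@le_trans _ _ (\sum_(0 <= i < m.*2) g i)).
  rewrite [X in _ <= X](big_cat_nat (n:=m)) //=; last first.
  rewrite -addnn; exact: leq_addr.
  by rewrite lerDl sumr_ge0.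
rewrite sum_even // scaler_sumr; apply: ler_sum => k _.
rewrite ge /exp_coeff /= expr_div_n.
rewrite [X in _ <= X](_ : _ = 2 * ((y ^+ 2) ^+ k * ((2 ^ k * k`!)%N%:R)^-1)); last first.
  rewrite natrM natrX invfM; rewrite /GRing.scale /=; lra.
apply: ler_wpM2l => //; apply: ler_wpM2l; first by rewrite exprn_ge0 ?sqr_ge0.
rewrite lef_pV2 ?posrE ?ltr0n ?fact_gt0 ?muln_gt0 ?expn_gt0 ?fact_gt0 //.
by rewrite ler_nat fact_double.
Unshelve. all: by end_near.
Qed.


Definition sg (b : bool) : R := if b then 1 else -1.

Lemma step_ineq (mu a : R) : 0 <= mu -> 2 * mu < 1 ->
  expR (mu * (a + 1) ^+ 2) + expR (mu * (a - 1) ^+ 2) <=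
  2 * expR (- ln (1 - 2 * mu) / 2 + mu * a ^+ 2 / (1 - 2 * mu)).
Proof.
move=> mu0 mu1.
have -> : mu * (a + 1) ^+ 2 = mu * (a ^+ 2 + 1) + 2 * mu * a by ring.
have -> : mu * (a - 1) ^+ 2 = mu * (a ^+ 2 + 1) + - (2 * mu * a) by ring.
rewrite !expRD -mulrDr.
apply: (le_trans (ler_wpM2l (expR_ge0 _) (cosh_le _))).
rewrite mulrCA -expRD ler_pM2l // -expRD ler_expR.
have d0 : 0 < 1 - 2 * mu by lra.
have hl : ln (1 - 2 * mu) <= - (2 * mu).
  apply: le_ln1Dx; lra.
have h2 : mu * a ^+ 2 * (1 + 2 * mu) <= mu * a ^+ 2 / (1 - 2 * mu).
  rewrite ler_pdivlMr //.
  have : 0 <= mu * a ^+ 2 * (4 * mu ^+ 2).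
    by apply: mulr_ge0; [apply: mulr_ge0 => //; apply: sqr_ge0 | nra].
  nra.
have -> : (2 * mu * a) ^+ 2 / 2 = 2 * mu ^+ 2 * a ^+ 2 by field.
nra.
Qed.


Definition fcons (T : Type) (L : nat) (b : T) (g : {ffun 'I_L -> T}) : {ffun 'I_L.+1 -> T} :=
  [ffun i => if unlift ord0 i is Some j then g j else b].
Arguments fcons {T L}.

Lemma sum_ffunS (T : finType) (L : nat) (F : {ffun 'I_L.+1 -> T} -> R) :
  \sum_(f : {ffun 'I_L.+1 -> T}) F f = \sum_(b : T) \sum_(g : {ffun 'I_L -> T}) F (fcons b g).
Proof.
rewrite pair_big /=.
rewrite (reindex (fun p : T * {ffun 'I_L -> T} => fcons p.1 p.2)) //=.
exists (fun f : {ffun 'I_L.+1 -> T} => (f ord0, [ffun j => f (lift ord0 j)])).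
  move=> [b g] _ /=; congr pair; first by rewrite /fcons ffunE unlift_none.
  by apply/ffunP => j; rewrite !ffunE liftK.
move=> f _; apply/ffunP => i; rewrite /fcons !ffunE.
by case: (unliftP ord0 i) => [j ->|->]; rewrite ?ffunE.
Qed.

Lemma sum_fcons L (b : bool) (g : {ffun 'I_L -> bool}) :
  \sum_(i < L.+1) sg (fcons b g i) = sg b + \sum_(i < L) sg (g i).
Proof.
rewrite big_ord_recl /fcons ffunE unlift_none; congr (_ + _).
by apply: eq_bigr => i _; rewrite ffunE liftK.
Qed.

Lemma mgf (la : R) (L : nat) : 0 <= la -> 2 * la * L%:R < 1 -> forall a,
  \sum_(e : {ffun 'I_L -> bool}) expR (la * (a + \sum_(i < L) sg (e i)) ^+ 2)
  <= 2 ^+ L * expR (- ln (1 - 2 * la * L%:R) / 2 + la * a ^+ 2 / (1 - 2 * la * L%:R)).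
Proof.
move=> la0; elim: L => [|L IH] hL a.
  rewrite mulr0 subr0 ln1 oppr0 mul0r add0r divr1 expr0 mul1r.
  under eq_bigr do rewrite big_ord0 addr0.
  rewrite sumr_const card_ffun card_ord card_bool expn0 mulr1n.
  by [].
rewrite sum_ffunS big_bool /=.
under eq_bigr do rewrite sum_fcons addrA.
under [X in _ + X <= _]eq_bigr do rewrite sum_fcons addrA.
rewrite /sg.
have hL' : 2 * la * L%:R < 1.
  apply: le_lt_trans hL; rewrite ler_wpM2l ?ler_nat //; lra.
set d := 1 - 2 * la * L%:R.
have d0 : 0 < d by rewrite /d; lra.
set mu := la / d.
have mu0 : 0 <= mu by rewrite /mu divr_ge0 // ltW.
have mu1 : 2 * mu < 1.
  rewrite /mu mulrA ltr_pdivrMr // mul1r /d; move: hL; rewrite -natr1; lra.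
apply: (le_trans (lerD (IH hL' (a + 1)) (IH hL' (a + -1)))).
rewrite -/d (exprSr (2:R) L) -(mulrA (2 ^+ L)) -mulrDr ler_pM2l ?exprn_gt0 //.
rewrite (expRD (- ln d / 2)) (expRD (- ln d / 2)) -mulrDr.
have e1 : forall x, la * x / d = mu * x by move=> x; rewrite /mu mulrAC.
rewrite !e1.
apply: (le_trans (ler_wpM2l (expR_ge0 _) (@step_ineq mu a mu0 mu1))).
rewrite mulrCA -expRD.
have d2 : 0 < d - 2 * la by rewrite /d; move: hL; rewrite -natr1; lra.
have dd : (1 - 2 * mu) * d = 1 - 2 * la * L.+1%:R.
  rewrite (_ : 1 - 2 * la * L.+1%:R = d - 2 * la); last first.
    by rewrite /d -natr1; ring.
  rewrite /mu; field; by rewrite !gt_eqF.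
have dm0 : 0 < 1 - 2 * mu by lra.
rewrite -dd lnM ?posrE //.
rewrite (_ : la * a ^+ 2 / ((1 - 2 * mu) * d) = mu * a ^+ 2 / (1 - 2 * mu)); last first.
  rewrite /mu; field; by rewrite !gt_eqF.
apply: ler_wpM2l => //; rewrite ler_expR; lra.
Qed.


Section Chernoff.
Variables (n L : nat).
Local Notation W := {ffun 'I_n -> bool}.

Definition Qf (t : {ffun 'I_L -> W}) : R :=
  \sum_(j < n) (\sum_(i < L) sg (t i j)) ^+ 2.

Definition trf (f : {ffun 'I_n -> {ffun 'I_L -> bool}}) : {ffun 'I_L -> W} :=
  [ffun i => [ffun j => f j i]].

Lemma chernoff (la thr : R) : 0 <= la -> 2 * la * L%:R < 1 ->
  (#|[set t : {ffun 'I_L -> W} | thr <= Qf t]|%:R : R) <=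
  expR (- (la * thr)) * (2 ^+ L * expR (- ln (1 - 2 * la * L%:R) / 2)) ^+ n.
Proof.
move=> la0 hL.
rewrite -sum1_card natr_sum big_mkcond /=.
apply: (@le_trans _ _ (\sum_(t : {ffun 'I_L -> W}) expR (la * (Qf t - thr)))).
  apply: ler_sum => t _; rewrite inE; case: ifP => h; last exact: expR_ge0.
  by rewrite -expR0 ler_expR mulr_ge0 // subr_ge0.
have -> : \sum_(t : {ffun 'I_L -> W}) expR (la * (Qf t - thr)) =
    expR (- (la * thr)) * \sum_(t : {ffun 'I_L -> W}) expR (la * Qf t).
  rewrite mulr_sumr; apply: eq_bigr => t _; rewrite -expRD; congr expR; ring.
rewrite ler_pM2l ?expR_gt0 //.
rewrite (reindex trf) /=; last first.
  exists (fun t : {ffun 'I_L -> W} => [ffun j => [ffun i => t i j]]).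
    by move=> f _; apply/ffunP => j; apply/ffunP => i; rewrite !ffunE.
  by move=> t _; apply/ffunP => i; apply/ffunP => j; rewrite !ffunE.
have -> : \sum_(f : {ffun 'I_n -> {ffun 'I_L -> bool}}) expR (la * Qf (trf f)) =
   \sum_(f : {ffun 'I_n -> {ffun 'I_L -> bool}}) \prod_(j < n)
      (fun j (e : {ffun 'I_L -> bool}) => expR (la * (\sum_(i < L) sg (e i)) ^+ 2)) j (f j).
  apply: eq_bigr => f _; rewrite /Qf mulr_sumr expR_sum; apply: eq_bigr => j _.
  by congr (expR (_ * _ ^+ 2)); apply: eq_bigr => i _; rewrite !ffunE.
pose F := fun (j : 'I_n) (e : {ffun 'I_L -> bool}) => expR (la * (\sum_(i < L) sg (e i)) ^+ 2).
rewrite (_ : \sum_(f : {ffun 'I_n -> {ffun 'I_L -> bool}}) _ =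
   \sum_(f : {ffun 'I_n -> {ffun 'I_L -> bool}}) \prod_(j < n) F j (f j)) //.
rewrite -(bigA_distr_bigA F) /= /F prodr_const card_ord.
apply: lerXn2r.
- by rewrite nnegrE sumr_ge0 // => e _; apply: expR_ge0.
- by rewrite nnegrE mulr_ge0 ?exprn_ge0 ?expR_ge0.
have := @mgf la L la0 hL 0.
rewrite expr0n /= mulr0 mul0r addr0.
by under eq_bigr do rewrite add0r.
Qed.
End Chernoff.


Section Avg.
Variables (T : finType) (p : R).
Hypothesis p01 : 0 <= p <= 1.

Definition wt (A : {ffun T -> bool}) : R := \prod_(x : T) (if A x then p else 1 - p).

Lemma wt_ge0 A : 0 <= wt A.
Proof.
rewrite /wt; apply: prodr_ge0 => x _; case: (A x); move: p01 => /andP[]; lra.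
Qed.

Lemma wt_req (h : {set T}) :
  \sum_(A : {ffun T -> bool}) wt A * ([forall x, (x \in h) ==> A x])%:R = p ^+ #|h|.
Proof.
pose g := fun (x : T) (b : bool) => if b then p else (if x \in h then 0 else 1 - p).
have -> : \sum_(A : {ffun T -> bool}) wt A * ([forall x, (x \in h) ==> A x])%:R =
          \sum_(A : {ffun T -> bool}) \prod_(x : T) g x (A x).
  apply: eq_bigr => A _; rewrite /wt /g.
  case: (boolP [forall x, _]) => [/forallP H|/forallPn [x]].
    rewrite mulr1; apply: eq_bigr => x _; case: ifP => // Ax.
    by move: (H x); rewrite Ax implybF => /negbTE ->.
  rewrite negb_imply => /andP[xh nAx].
  rewrite mulr0 (bigD1 x) //= (negbTE nAx) xh mul0r //.
rewrite -(bigA_distr_bigA g) /=.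
under eq_bigr do rewrite big_bool /g /=.
rewrite (eq_bigr (fun x => if x \in h then p else 1)); last first.
  by move=> x _; case: (x \in h); rewrite ?addr0 // addrC subrK.
by rewrite -big_mkcond /= prodr_const.
Qed.

Lemma wt_sum1 : \sum_(A : {ffun T -> bool}) wt A = 1.
Proof.
rewrite -(expr0 p) -(cards0 T) -wt_req; apply: eq_bigr => A _.
by rewrite (_ : [forall x, _] = true) ?mulr1 //; apply/forallP => x; rewrite inE.
Qed.

Lemma wt_mem y : \sum_(A : {ffun T -> bool}) wt A * (A y)%:R = p.
Proof.
rewrite -(expr1 p) -(cards1 y) -wt_req; apply: eq_bigr => A _.
rewrite (_ : [forall x, _] = A y) //; apply/idP/idP => [/forallP H|Ay].
  by move: (H y); rewrite inE eqxx.
by apply/forallP => x; apply/implyP; rewrite inE => /eqP ->.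
Qed.

Lemma avg_exists (X : {ffun T -> bool} -> R) :
  exists A, \sum_(B : {ffun T -> bool}) wt B * X B <= X A.
Proof.
pose A0 := [ffun x : T => false].
case: (@arg_maxP _ _ _ A0 predT X isT) => A _ H.
exists A; rewrite -[X A]mul1r -wt_sum1 mulr_suml.
by apply: ler_sum => B _; apply: ler_wpM2l; [apply: wt_ge0 | apply: H].
Qed.
End Avg.
Arguments wt {T}. Arguments wt_mem {T p}. Arguments wt_req {T p}.
Arguments avg_exists {T p}. Arguments wt_sum1 {T p}. Arguments wt_ge0 {T p}.


Arguments Qf {n L}.

Lemma exists_good (n L : nat) (i0 : 'I_L) (p thr : R) : 0 <= p <= 1 ->
  exists A' : {set {ffun 'I_n -> bool}},
    2 ^+ n * p - #|[set t : {ffun 'I_L -> {ffun 'I_n -> bool}} | thr <= Qf t]|%:R * p ^+ L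
      <= #|A'|%:R /\
    forall t : {ffun 'I_L -> {ffun 'I_n -> bool}}, injective t -> (forall i, t i \in A') ->
      Qf t < thr.
Proof.
move=> p01.
pose W := {ffun 'I_n -> bool}.
pose Bad (A : {ffun W -> bool}) := [set t : {ffun 'I_L -> W} |
   [&& injectiveb t, [forall i, A (t i)] & thr <= Qf t]].
pose X (A : {ffun W -> bool}) : R := #|[set x | A x]|%:R - #|Bad A|%:R.
have [A HA] := avg_exists p01 X.
have E1 : \sum_(B : {ffun W -> bool}) wt p B * #|[set x | B x]|%:R = 2 ^+ n * p.
  under eq_bigr do rewrite -sum1_card natr_sum big_mkcond /= mulr_sumr.
  rewrite exchange_big /=.
  rewrite (eq_bigr (fun _ => p)); last first.
    move=> x _; rewrite -[RHS](@wt_mem _ p x); apply: eq_bigr => B _.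
    by rewrite inE; case: (B x).
  by rewrite /W sumr_const card_ffun card_ord card_bool -natrX mulr_natl.
have E2 : \sum_(B : {ffun W -> bool}) wt p B * #|Bad B|%:R <=
    #|[set t : {ffun 'I_L -> W} | thr <= Qf t]|%:R * p ^+ L.
  under eq_bigr do rewrite -sum1_card natr_sum big_mkcond /= mulr_sumr.
  rewrite exchange_big /=.
  rewrite -sum1_card natr_sum mulr_suml [X in _ <= X]big_mkcond /=.
  apply: ler_sum => t _.
  rewrite inE; under eq_bigr do rewrite inE.
  have p0 : 0 <= p ^+ L by rewrite exprn_ge0 //; case/andP: p01.
  case: (boolP (injectiveb t)) => [/injectiveP tinj|ninj] /=; last first.
    rewrite big1; first by case: ifP => _; rewrite ?mul1r.
    by move=> B _; rewrite mulr0.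
  case: (boolP (thr <= Qf t)) => hb /=; last first.
    by rewrite big1 // => B _; rewrite andbF mulr0.
  rewrite mul1r.
  have hc : #|[set t i | i : 'I_L]| = L by rewrite card_imset // card_ord.
  rewrite -[X in _ <= _ ^+ X]hc -wt_req le_eqVlt; apply/orP; left; apply/eqP.
  apply: eq_bigr => B _; rewrite andbT.
  rewrite (_ : [forall x, _] = [forall i, B (t i)]); first by case: ifP.
  apply/idP/idP => [/forallP H|/forallP H].
    by apply/forallP => i; move: (H (t i)) => /implyP; apply; apply/imsetP; exists i.
  by apply/forallP => x; apply/implyP => /imsetP [i _ ->]; exact: H.
have hX : 2 ^+ n * p - #|[set t : {ffun 'I_L -> W} | thr <= Qf t]|%:R * p ^+ L <= X A.
  apply: le_trans HA; rewrite /X.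
  under eq_bigr do rewrite mulrBr.
  rewrite sumrB E1; lra.
pose D := [set t i0 | t : {ffun 'I_L -> W} in Bad A].
exists ([set x | A x] :\: D); split.
  apply: (le_trans hX); rewrite /X cardsD natrB ?subset_leq_card ?subsetIl //.
  rewrite lerD2l lerN2 ler_nat.
  apply: leq_trans (subset_leq_card (subsetIr _ _)) _.
  exact: leq_imset_card.
move=> t tinj tA; rewrite ltNge; apply/negP => bad.
have tB : t \in Bad A.
  rewrite inE; apply/and3P; split => //; first by apply/injectiveP.
  by apply/forallP => i; move: (tA i); rewrite !inE => /andP[_].
by move: (tA i0); rewrite !inE => /andP[/negP []]; apply/imsetP; exists t.
Qed.


Lemma sq_dev (L : nat) (x : 'I_L -> R) (c : R) :
  \sum_(i < L) (x i - c) ^+ 2 =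
  \sum_(i < L) x i ^+ 2 - 2 * c * \sum_(i < L) x i + L%:R * c ^+ 2.
Proof.
rewrite (eq_bigr (fun i => x i ^+ 2 - 2 * c * x i + c ^+ 2)); last by move=> i _; ring.
rewrite big_split sumrB /= -mulr_sumr sumr_const card_ord mulr_natl.
by rewrite mulr_natl.
Qed.

Lemma sg2 b : sg b ^+ 2 = 1.
Proof. by case: b; rewrite /sg ?expr1n ?sqrrN ?expr1n. Qed.

Lemma alg1 (a S : R) (L : nat) : L%:R != 0 :> R ->
  a ^+ 2 *+ L - L%:R^-1 * (a * S) *+ 2 * (a * S) + L%:R * (L%:R^-1 * (a * S)) ^+ 2
  = L%:R * a ^+ 2 - a ^+ 2 / L%:R * S ^+ 2.
Proof.
move=> hL.
have h2 : forall x : R, x *+ 2 = 2 * x by move=> x; rewrite mulr_natl.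
have hL' : forall x : R, x *+ L = L%:R * x by move=> x; rewrite mulr_natl.
rewrite h2 hL'; field; exact: hL.
Qed.

Section Geo.
Variables (n L : nat) (P : R).
Hypothesis P0 : 0 <= P.
Hypothesis L0 : (0 < L)%N.
Local Notation W := {ffun 'I_n -> bool}.

Definition emb (w : W) : 'rV[R]_n := \row_(j < n) (Num.sqrt P * sg (w j)).

Lemma sqnorm_emb w : sqnorm (emb w) = n%:R * P.
Proof.
rewrite /sqnorm (eq_bigr (fun _ => P)); last first.
  by move=> j _; rewrite mxE exprMn sg2 mulr1 sqr_sqrtr.
by rewrite sumr_const card_ord mulr_natl.
Qed.

Lemma avg_emb (t : {ffun 'I_L -> W}) :
  avg_rad2 (fun i => emb (t i)) = n%:R * P - P / L%:R ^+ 2 * Qf t.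
Proof.
rewrite /avg_rad2 /sqnorm exchange_big /=.
have Lne : L%:R != 0 :> R by rewrite pnatr_eq0 -lt0n.
rewrite (eq_bigr (fun j : 'I_n => L%:R * P - P / L%:R * (\sum_(i < L) sg (t i j)) ^+ 2)); last first.
  move=> j _.
  rewrite (eq_bigr (fun i : 'I_L => (Num.sqrt P * sg (t i j) -
       L%:R^-1 * (Num.sqrt P * \sum_(i < L) sg (t i j))) ^+ 2)); last first.
    move=> i _; rewrite /centroid !mxE summxE; congr ((_ - _ * _) ^+ 2).
    by rewrite mulr_sumr; apply: eq_bigr => k _; rewrite mxE.
  rewrite sq_dev.
  rewrite (eq_bigr (fun _ => P)); last by move=> i _; rewrite exprMn sg2 mulr1 sqr_sqrtr.
  rewrite sumr_const card_ord -mulr_sumr mulr_natl.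
  set S := \sum_(i < L) sg (t i j).
  have hP : Num.sqrt P ^+ 2 = P by rewrite sqr_sqrtr.
  by have := @alg1 (Num.sqrt P) S L Lne; rewrite hP.
rewrite sumrB mulrBr sumr_const card_ord -mulr_sumr /Qf.
rewrite -[_ *+ n]mulr_natl; field; exact: Lne.
Qed.
End Geo.


Arguments emb {n}.

Lemma emb_inj n P : 0 < P -> injective (@emb n P).
Proof.
move=> P0 w w' h; apply/ffunP => j.
have := congr1 (fun v : 'rV[R]_n => v 0 j) h; rewrite /= !mxE.
have s0 : Num.sqrt P != 0 by rewrite gt_eqF // sqrtr_gt0.
move/(mulfI s0); rewrite /sg.
by case: (w j); case: (w' j) => //= hh; exfalso; lra.
Qed.

Lemma code_exists (n L : nat) (P N u p : R) (i0 : 'I_L) :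
  0 < P -> u = L%:R * (P - N) / P -> 0 <= p <= 1 ->
  exists C : seq 'rV[R]_n, avg_rad_list_decodable L P N C /\
     2 ^+ n * p - #|[set t : {ffun 'I_L -> {ffun 'I_n -> bool}} |
           n%:R * L%:R * u <= Qf t]|%:R * p ^+ L <= (size C)%:R.
Proof.
move=> P0 hu p01.
have [A' [hA' gA']] := @exists_good n L i0 p (n%:R * L%:R * u) p01.
exists (map (emb P) (enum A')); split; last by rewrite size_map -cardE.
have L0 : (0 < L)%N by case: (L) i0 => [[]|].
split; first by rewrite map_inj_uniq ?enum_uniq //; exact: emb_inj.
split.
  by move=> c /mapP [w _ ->]; rewrite sqnorm_emb // ltW.
move=> x xinj xC.
pose dec (v : 'rV[R]_n) : {ffun 'I_n -> bool} := [ffun j => 0 < v 0 j].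
have decK : forall w, dec (emb P w) = w.
  move=> w; apply/ffunP => j; rewrite ffunE mxE /sg.
  by case: (w j); rewrite ?mulr1 ?mulrN1 ?sqrtr_gt0 // oppr_gt0 ltNge sqrtr_ge0.
pose t := [ffun i => dec (x i)].
have xt : forall i, x i = emb P (t i) /\ t i \in A'.
  move=> i; rewrite ffunE; case/mapP: (xC i) => w wA ->; rewrite decK.
  by rewrite mem_enum in wA.
have tinj : injective t.
  move=> i k h; apply: xinj; rewrite (proj1 (xt i)) (proj1 (xt k)) h //.
have := gA' t tinj (fun i => proj2 (xt i)) => hQ.
have -> : x = (fun i => emb P (t i)) by apply: boolp.funext => i; rewrite (proj1 (xt i)).
rewrite avg_emb ?ltW //.
have Lpos : 0 < L%:R :> R by rewrite ltr0n.
have e : P / L%:R ^+ 2 * (n%:R * L%:R * u) = n%:R * (P - N).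
  rewrite hu; field; rewrite !gt_eqF //.
have : P / L%:R ^+ 2 * Qf t < P / L%:R ^+ 2 * (n%:R * L%:R * u).
  by rewrite ltr_pM2l // divr_gt0 // exprn_gt0.
rewrite e; lra.
Qed.

End Cosh.
Theorem mainTheorem6 (R : realType) (L : nat) (P N : R) :
  (2 <= L)%N -> 0 < P -> 0 < N -> N / P <= (L%:R - 1) / L%:R ->
  ((2%:R^-1 * (1 - (L%:R * N) / ((L%:R - 1) * P)
      - (L%:R - 1)^-1 * ln (L%:R * (P - N) / P)))%:E
     <= list_dec_capacity L P N)%E.
Proof.
move=> L2 P0 N0 hNP.
have L1 : 1 < L%:R :> R by rewrite ltr1n.
have Lpos : 0 < L%:R :> R by lra.
have h1 : N * L%:R <= (L%:R - 1) * P.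
  have := ler_wpM2r (ltW (mulr_gt0 P0 Lpos)) hNP.
  have -> : N / P * (P * L%:R) = N * L%:R by field; rewrite gt_eqF.
  have -> : (L%:R - 1) / L%:R * (P * L%:R) = (L%:R - 1) * P by field; rewrite gt_eqF.
  done.
have e1 : 1 - (L%:R * N) / ((L%:R - 1) * P) = (L%:R * (P - N) / P - 1) / (L%:R - 1).
  field; rewrite !gt_eqF //; lra.
rewrite e1.
set u := L%:R * (P - N) / P.
have u1 : 1 <= u by rewrite /u ler_pdivlMr // mul1r; nra.
have uL : u < L%:R by rewrite /u ltr_pdivrMr //; nra.
have u0 : 0 < u by lra.
set phi := u - 1 - ln u.
have lnu0 : 0 <= ln u by apply: ln_ge0.
have ef : 2%:R^-1 * ((u - 1) / (L%:R - 1) - (L%:R - 1)^-1 * ln u) = phi / (2 * (L%:R - 1)).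
  rewrite /phi; field; rewrite gt_eqF //; lra.
rewrite ef.
set f := phi / (2 * (L%:R - 1)).
have fhalf : f <= 2^-1.
  rewrite /f ler_pdivrMr; last lra.
  rewrite /phi; lra.
apply/lee_subgt0Pr => d d0.
rewrite /list_dec_capacity limn_esup_lim.
apply: lime_ge; first exact: is_cvg_esups.
exists (Num.trunc (2 / d)).+1 => // n /= hn.
apply: (@le_trans _ _ (best_rate L P N n)); last first.
  by apply: ereal_sup_ubound; exists n => /=.
have nd : 2 / d < n%:R.
  apply: (lt_le_trans (truncnS_gt _)); rewrite ler_nat; exact: hn.
have npos : 0 < n%:R :> R by apply: le_lt_trans nd; rewrite divr_ge0 // ltW.
have nd2 : 2 <= n%:R * d by move: nd; rewrite ltr_pdivrMr //; lra.
set r := f - d / 2.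
set p := expR (n%:R * r) / 2 ^+ n.
have eh : expR (2^-1) <= 2 :> R.
  have hh1 := expR_ge1Dx (- 2^-1 : R).
  have hh2 : expR (2^-1) * expR (- 2^-1) = 1 :> R by rewrite -expRD addrN expR0.
  have := expR_gt0 (2^-1 : R); nra.
have p01 : 0 <= p <= 1.
  apply/andP; split; first by rewrite /p divr_ge0 ?expR_ge0 // exprn_ge0.
  rewrite /p ler_pdivrMr ?exprn_gt0 // mul1r.
  apply: (@le_trans _ _ (expR (2^-1) ^+ n)); last first.
    by apply: lerXn2r; rewrite ?nnegrE ?expR_ge0.
  rewrite -expRM_natl ler_expR ler_pM2l //; rewrite /r; lra.
have i0 : 'I_L by exists 0%N; apply: leq_trans L2.
have [C [HC hsize]] := @code_exists R n L P N u p i0 P0 erefl p01.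
apply: (@le_trans _ _ (rate C)%:E); last first.
  by apply: ereal_sup_ubound; exists C.
rewrite -EFinD lee_fin.
set la := (1 - u^-1) / (2 * L%:R).
have ui1 : u^-1 <= 1 by rewrite invr_le1 // ?unitfE ?gt_eqF.
have ui0 : 0 < u^-1 by rewrite invr_gt0.
have la0 : 0 <= la by rewrite /la divr_ge0 //; lra.
have une : u != 0 by rewrite gt_eqF.
have Lne : L%:R != 0 :> R by rewrite gt_eqF.
have e2 : 1 - 2 * la * L%:R = u^-1 by rewrite /la; field; rewrite une Lne.
have hla : 2 * la * L%:R < 1 by lra.
have hch := @chernoff R n L la (n%:R * L%:R * u) la0 hla.
have e3 : la * (n%:R * L%:R * u) = n%:R * (u - 1) / 2.
  by rewrite /la; field; rewrite ?une ?Lne.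
rewrite e2 e3 lnV ?posrE // opprK in hch.
set Eb := (#|_|%:R : R) in hch hsize.
have hE : Eb <= (2 ^+ n) ^+ L * expR (- (n%:R * phi / 2)).
  apply: (le_trans hch).
  rewrite exprMn -expRM_natl -!exprM mulnC mulrCA -expRD.
  rewrite le_eqVlt; apply/orP; left; apply/eqP; congr (_ * expR _).
  rewrite /phi; ring.
have p0 : 0 <= p ^+ L by rewrite exprn_ge0 //; case/andP: p01.
have hp : 2 ^+ n * p = expR (n%:R * r).
  by rewrite /p mulrC divfK // expf_neq0 // pnatr_eq0.
have hEp : Eb * p ^+ L <= expR (- (n%:R * phi / 2)) * expR (n%:R * r) ^+ L.
  apply: (le_trans (ler_wpM2r p0 hE)).
  by rewrite mulrAC -exprMn hp mulrC.
set K := - (n%:R * phi / 2) + (L%:R - 1) * (n%:R * r).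
have eK : K = - ((L%:R - 1) * (n%:R * d) / 2).
  rewrite /K /r /f; field; rewrite gt_eqF //; lra.
have hL2 : 2 <= L%:R :> R by rewrite ler_nat.
have K1 : K <= -1.
  rewrite eK.
  have : 0 <= (L%:R - 2) * (n%:R * d - 2) by apply: mulr_ge0; lra.
  nra.
have eK1 : expR K <= 2^-1.
  have hh1 := expR_ge1Dx (1 : R).
  have hh2 : expR 1 * expR (-1) = 1 :> R by rewrite -expRD addrN expR0.
  have := expR_gt0 (-1 : R).
  have : expR K <= expR (-1) by rewrite ler_expR.
  nra.
have e4 : expR (- (n%:R * phi / 2)) * expR (n%:R * r) ^+ L =
          expR (n%:R * r) * expR K.
  rewrite -expRM_natl -!expRD; congr expR; rewrite /K; ring.
rewrite e4 -hp in hEp.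
have hs : expR (n%:R * r) / 2 <= (size C)%:R.
  apply: le_trans hsize; rewrite -hp.
  have := expR_gt0 (n%:R * r); nra.
have s0 : 0 < (size C)%:R :> R.
  apply: lt_le_trans hs; by rewrite divr_gt0 ?expR_gt0.
rewrite /rate ler_pdivlMr //.
have hl : ln (expR (n%:R * r) / 2) <= ln (size C)%:R.
  by rewrite ler_ln // posrE divr_gt0 ?expR_gt0.
rewrite ln_div ?posrE ?expR_gt0 // expRK in hl.
have ln2 : ln (2 : R) <= 1.
  have hm : (-1 : R) < 1 by lra.
  by have := le_ln1Dx hm; rewrite (_ : 1 + 1 = 2 :> R).
rewrite /r in hl; nra.
Qed.
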